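(* Let $\mathcal P$ be an $\mathsf{NPO}\text{-}\mathsf{PB}$ problem. Then there is a polynomial $q$ such that for every instance of $\mathcal P$ of input size $s$, the DLA of QWOA for that instance satisfies $\dim(\mathfrak g_{\mathrm{QWOA},\mathcal P})\le q(s)$; i.e. $\dim(\mathfrak g_{\mathrm{QWOA},\mathcal P})=\mathcal O(\mathrm{poly}(s))$.
   Context: An instance of a combinatorial optimization problem consists of a finite nonempty set $\mathcal S'$ of feasible solutions and a cost function $C:\mathcal S'\to\mathbb R$. Let $N=|\mathcal S'|$. Work in $\mathbb C^N$ with orthonormal basis $\{|z\rangle : z\in\mathcal S'\}$. The problem Hamiltonian is the diagonal matrix $H_C$ with $H_C|z\rangle=C(z)|z\rangle$; the mixing Hamiltonian is the $N\times N$ all-ones matrix $H_M=J$ (equal, up to adding the identity, to the adjacency matrix of the complete graph $K_N$). The DLA of QWOA, $\mathfrak g_{\mathrm{QWOA},\mathcal P}$, for an instance of problem $\mathcal P$ is the real Lie algebra generated by $iH_C$ and $iH_M$, i.e. the smallest real linear subspace of $N\times N$ complex matrices containing $iH_C,iH_M$ and closed under the commutator; its dimension is its real dimension. The class $\mathsf{NPO}$ consists of optimization problems whose solutions have size polynomial in the input size $s$ and whose feasibility and cost can be computed in deterministic polynomial time. $\mathsf{NPO}\text{-}\mathsf{PB}$ consists of $\mathsf{NPO}$ problems whose cost function takes values in a discrete range of size polynomially bounded in $s$ (e.g. integer values in $\{0,1,\dots,r(s)\}$ for a polynomial $r$). *)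

(* Defs.v *)
From HB Require Import structures.
From mathcomp Require Import all_boot all_order all_algebra.
Set Implicit Arguments. Unset Strict Implicit. Unset Printing Implicit Defensive.
Import Order.TTheory GRing.Theory Num.Theory.
Local Open Scope ring_scope.

Section QWOA.
Variable C : numClosedFieldType. (* the complex numbers (any numeric closed field) *)

(* Problem Hamiltonian: diagonal matrix of the cost, basis indexed by the
   feasible solutions z in S (enumerated via enum_val). *)
Definition HC (S : finType) (c : S -> C) : 'M[C]_#|S| :=
  \matrix_(i, j) (if i == j then c (enum_val i) else 0).

Definition HM (n : nat) : 'M[C]_n := const_mx 1.

Definition lie_bracket n (A B : 'M[C]_n) : 'M[C]_n := A *m B - B *m A.

Definition real_lie_subalgebra n (U : 'M[C]_n -> Prop) : Prop :=
  [/\ U 0,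
      (forall A B, U A -> U B -> U (A + B)),
      (forall (a : C) A, a \is Num.real -> U A -> U (a *: A)) &
      (forall A B, U A -> U B -> U (lie_bracket A B))].

Definition gen_real_lie n (X Y : 'M[C]_n) (A : 'M[C]_n) : Prop :=
  forall U, real_lie_subalgebra U -> U X -> U Y -> U A.

Definition DLA_QWOA (S : finType) (c : S -> C) : 'M[C]_#|S| -> Prop :=
  gen_real_lie ('i *: HC c) ('i *: HM #|S|).

Definition real_lin_indep n (fam : seq 'M[C]_n) : Prop :=
  forall a : 'I_(size fam) -> C,
    (forall i, a i \is Num.real) ->
    \sum_(i < size fam) a i *: fam`_i = 0 -> forall i, a i = 0.

Definition real_dim_le n (L : 'M[C]_n -> Prop) (d : int) : Prop :=
  forall fam : seq 'M[C]_n, (forall A, A \in fam -> L A) ->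
    real_lin_indep fam -> (size fam)%:Z <= d.

Definition num_cost_values (S : finType) (c : S -> C) : nat :=
  size (undup [seq c z | z <- enum S]).

End QWOA.

(* Main.v *)
Require Import Defs.
From HB Require Import structures.
From mathcomp Require Import all_boot all_order all_algebra all_fingroup.
Set Implicit Arguments. Unset Strict Implicit. Unset Printing Implicit Defensive.
Import Order.TTheory GRing.Theory Num.Theory.
Local Open Scope ring_scope.

Section Dim.
Variable C : numClosedFieldType.

Lemma dim_bound n (T : finType) (Bf : T -> 'M[C]_n) (coef : 'M[C]_n -> T -> C)
  (fam : seq 'M[C]_n) :
  (forall A, A \in fam -> (forall t, coef A t \is Num.real) /\ A = \sum_t coef A t *: Bf t) ->
  real_lin_indep fam -> (size fam <= #|T|)%N.
Proof.
move=> Hsp Hind; rewrite leqNgt; apply/negP => HT.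
set p := size fam in HT Hind *.
pose M : 'M[C]_(p, #|T|) := \matrix_(i, j) coef fam`_i (enum_val j).
have nrf : ~~ row_free M.
  by rewrite /row_free; apply/negP => /eqP H; move: (rank_leq_col M); rewrite H leqNgt HT.
have : kermx M != 0 by rewrite kermx_eq0.
move/eqP => Hk.
have [i0 Hi0] : exists i0, row i0 (kermx M) != 0.
  apply/existsP; rewrite -negb_forall; apply/negP => /forallP Hr; apply: Hk.
  by apply/row_matrixP => i; rewrite row0; apply/eqP; move: (Hr i); rewrite ?negbK.
set a := row i0 (kermx M) in Hi0.
have HaM : a *m M = 0 by rewrite /a -row_mul mulmx_ker row0.
have [j Hj] : exists j, a 0 j != 0.
  apply/existsP; rewrite -negb_forall; apply/negP => /forallP Hr; move/eqP: Hi0; apply.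
  by apply/matrixP => i j; move: (Hr j); rewrite (ord1 i) [RHS]mxE => /eqP.
have key : forall f : C -> C, f 0 = 0 -> {morph f : x y / x + y} ->
   (forall x r, r \is Num.real -> f (x * r) = f x * r) ->
   (forall x, f x \is Num.real) ->
   forall i, f (a 0 i) = 0.
  move=> f f0 fD fM fR.
  have H0 : \sum_(i < p) f (a 0 i) *: fam`_i = 0.
    transitivity (\sum_(i < p) \sum_t (f (a 0 i) * coef fam`_i t) *: Bf t).
      apply: eq_bigr => i _; rewrite {1}(proj2 (Hsp _ (mem_nth 0 (ltn_ord i)))).
      by rewrite scaler_sumr; apply: eq_bigr => t _; rewrite scalerA.
    rewrite exchange_big big1 // => t _; rewrite -scaler_suml.
    have -> : \sum_(i < p) f (a 0 i) * coef fam`_i t = f ((a *m M) 0 (enum_rank t)).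
      rewrite [in RHS]mxE (big_morph f fD f0); apply: eq_bigr => i _.
      by rewrite mxE [M _ _]mxE enum_rankK fM // (proj1 (Hsp _ (mem_nth 0 (ltn_ord i)))).
    by rewrite HaM mxE f0 scale0r.
  by move=> i; apply: (Hind (fun i => f (a 0 i))) => // i1; apply: fR.
have HRe := key (@Re C) (raddf0 _) (raddfD _) (fun x r Hr => ReMr Hr x) (@Creal_Re C).
have HIm := key (@Im C) (raddf0 _) (raddfD _) (fun x r Hr => ImMr Hr x) (@Creal_Im C).
by move: Hj; rewrite [a 0 j]Crect HRe HIm mulr0 addr0 eqxx.
Qed.
End Dim.
Section Inv.
Variable C : numClosedFieldType.
Variable S : finType.
Variable c : S -> C.

Definition c' (i : 'I_#|S|) := c (enum_val i).

Definition invm (A : 'M[C]_#|S|) := forall s : {perm 'I_#|S|},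
  (forall i, c' (s i) = c' i) -> forall i j, A (s i) (s j) = A i j.

Lemma invm_mul A B : invm A -> invm B -> invm (A *m B).
Proof.
move=> HA HB s Hs i j; rewrite !mxE (reindex_inj (@perm_inj _ s)) /=.
by apply: eq_bigr => l _; rewrite HA // HB.
Qed.

Lemma invm_lie : real_lie_subalgebra invm.
Proof.
split.
- by move=> s Hs i j; rewrite !mxE.
- by move=> A B HA HB s Hs i j; rewrite !mxE HA // HB.
- by move=> a A _ HA s Hs i j; rewrite !mxE HA.
- move=> A B HA HB s Hs i j; rewrite /lie_bracket.
  have h1 := invm_mul HA HB Hs i j; have h2 := invm_mul HB HA Hs i j.
  rewrite mxE [in RHS]mxE; congr (_ + _); first exact: h1.
  by rewrite !mxE; congr (- _); move: h2; rewrite !mxE.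
Qed.

Lemma DLA_invm A : DLA_QWOA c A -> invm A.
Proof.
move=> H; apply: (H invm); first exact: invm_lie.
- move=> s Hs i j; rewrite /HC !mxE (inj_eq (@perm_inj _ s)).
  by case: eqP => // ->; move: (Hs j); rewrite /c' => ->.
- by move=> s Hs i j; rewrite /HM !mxE.
Qed.

Definition vals := undup [seq c z | z <- enum S].
Definition kk := size vals.

Lemma cls_lt i : (index (c' i) vals < kk)%N.
Proof. by rewrite index_mem mem_undup /c' map_f // mem_enum. Qed.

Definition cls i : 'I_kk := Ordinal (cls_lt i).

Lemma cls_eq i j : cls i = cls j -> c' i = c' j.
Proof.
move=> /(congr1 val) /= H.
have Hm : forall l, c' l \in vals by move=> l; rewrite mem_undup /c' map_f // mem_enum.
by rewrite -(nth_index 0 (Hm i)) H nth_index.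
Qed.

Lemma tperm_pres x y : c' x = c' y -> forall i, c' (tperm x y i) = c' i.
Proof. by move=> H i; case: tpermP => // ->. Qed.

Lemma invm_off A i j i' j' : invm A -> i != j -> i' != j' ->
  c' i = c' i' -> c' j = c' j' -> A i' j' = A i j.
Proof.
move=> HA nij nij' ci cj.
pose j1 := tperm i i' j.
have Hj1 : j1 != i'.
  by rewrite -(tpermL i i') /j1 (inj_eq (@perm_inj _ _)) eq_sym.
have cj1 : c' j1 = c' j' by rewrite tperm_pres.
have e1 := HA _ (tperm_pres ci) i j; rewrite tpermL -/j1 in e1.
have nji : j' != i' by rewrite eq_sym.
have e2 := HA _ (tperm_pres cj1) i' j1; rewrite tpermL (tpermD Hj1 nji) in e2.
by rewrite e2.
Qed.

Lemma invm_diag A i i' : invm A -> c' i = c' i' -> A i' i' = A i i.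
Proof. by move=> HA ci; have e := HA _ (tperm_pres ci) i i; rewrite tpermL in e. Qed.

Definition E (t : 'I_kk * 'I_kk) : 'M[C]_#|S| :=
  \matrix_(i, j) ((i != j) && ((cls i, cls j) == t))%:R.
Definition D (v : 'I_kk) : 'M[C]_#|S| :=
  \matrix_(i, j) ((i == j) && (cls i == v))%:R.
Definition Bu (u : ('I_kk * 'I_kk) + 'I_kk) :=
  match u with inl t => E t | inr v => D v end.
Definition Bf (t : bool * (('I_kk * 'I_kk) + 'I_kk)) :=
  (if t.1 then 'i else 1) *: Bu t.2.
Definition xc (A : 'M[C]_#|S|) (u : ('I_kk * 'I_kk) + 'I_kk) : C :=
  match u with
  | inl t => if [pick p : 'I_#|S| * 'I_#|S| | (p.1 != p.2) && ((cls p.1, cls p.2) == t)]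
             is Some p then A p.1 p.2 else 0
  | inr v => if [pick i | cls i == v] is Some i then A i i else 0
  end.
Definition coef (A : 'M[C]_#|S|) (t : bool * (('I_kk * 'I_kk) + 'I_kk)) : C :=
  if t.1 then 'Im (xc A t.2) else 'Re (xc A t.2).

Lemma coef_real A t : coef A t \is Num.real.
Proof. by rewrite /coef; case: ifP => _; [exact: Creal_Im | exact: Creal_Re]. Qed.

Lemma span A : invm A -> A = \sum_t coef A t *: Bf t.
Proof.
move=> HA.
rewrite -(pair_bigA _ (fun b u => coef A (b, u) *: Bf (b, u))) big_bool /=.
rewrite -big_split /=.
have -> : \sum_u (coef A (true, u) *: Bf (true, u) + coef A (false, u) *: Bf (false, u))
   = \sum_u xc A u *: Bu u.
  apply: eq_bigr => u _; rewrite /coef /Bf /= scale1r scalerA -scalerDl.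
  by congr (_ *: _); rewrite [RHS]Crect addrC mulrC.
rewrite big_sumType /=.
apply/matrixP => i j; rewrite !mxE !summxE.
case: (eqVneq i j) => [<-|nij].
- rewrite big1 ?add0r; last by move=> t _; rewrite !mxE eqxx /= mulr0.
  rewrite (bigD1 (cls i)) //= big1 ?addr0; last first.
    by move=> v nv; rewrite !mxE eqxx eq_sym (negbTE nv) mulr0.
  rewrite !mxE !eqxx mulr1.
  case: pickP => [i' /eqP Hi'|]; last by move/(_ i); rewrite eqxx.
  by rewrite (invm_diag HA (cls_eq (esym Hi'))).
- rewrite [X in _ = _ + X]big1 ?addr0; last by move=> t _; rewrite !mxE (negbTE nij) mulr0.
  rewrite (bigD1 (cls i, cls j)) //= big1 ?addr0; last first.
    by move=> t nt; rewrite !mxE nij eq_sym (negbTE nt) mulr0.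
  rewrite !mxE nij eqxx mulr1.
  case: pickP => [[i' j'] /= /andP[nij' /eqP [Hi Hj]]|]; last first.
    by move/(_ (i, j)); rewrite /= nij eqxx.
  by rewrite (invm_off HA nij nij' (cls_eq (@val_inj _ _ _ (cls i) (cls i') (esym Hi))) (cls_eq (@val_inj _ _ _ (cls j) (cls j') (esym Hj)))).
Qed.

Lemma card_T : #|{: bool * (('I_kk * 'I_kk) + 'I_kk)}| = (2 * (kk * kk + kk))%N.
Proof. by rewrite card_prod card_bool card_sum card_prod !card_ord. Qed.

End Inv.

Theorem corollary1 (C : numClosedFieldType)
    (Inst : Type) (insize : Inst -> nat) (Sol : Inst -> finType)
    (cost : forall x : Inst, Sol x -> C)
    (Hne : forall x : Inst, (0 < #|Sol x|)%N)
    (Hreal : forall (x : Inst) (z : Sol x), cost x z \is Num.real)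
    (Hpb : exists r : {poly int}, forall x : Inst,
        (num_cost_values (cost x))%:Z <= r.[(insize x)%:Z]) :
  exists q : {poly int}, forall x : Inst,
    real_dim_le (DLA_QWOA (cost x)) q.[(insize x)%:Z].
Proof.
case: Hpb => r Hr; exists (2%:P * (r * r + r)) => x fam Hfam Hind.
have Hb := @dim_bound C _ _ (@Bf C (Sol x) (cost x)) (@coef C (Sol x) (cost x)) fam.
have Hs : (size fam <= 2 * (kk (cost x) * kk (cost x) + kk (cost x)))%N.
  rewrite -card_T; apply: Hb => // A HA; split; first exact: coef_real.
  by apply: span; apply: DLA_invm; apply: Hfam.
have Hk := Hr x; rewrite /num_cost_values -/(vals (cost x)) -/(kk (cost x)) in Hk.
rewrite !hornerE.
set R := r.[(insize x)%:Z] in Hk *.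
set k := kk (cost x) in Hs Hk.
apply: le_trans (_ : (2 * (k * k + k))%:Z <= _); first by rewrite lez_nat.
have k0 : (0 <= k%:Z) by [].
rewrite !PoszM PoszD.
have H1 : (k%:Z * k%:Z <= R * R) by apply: ler_pM.
have H2 : ((2%N)%:Z * (k%:Z * k%:Z + k%:Z) <= 2 * (R * R + R)).
  by rewrite ler_pM2l // lerD.
exact: H2.
Qed.
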